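(* Let $(X,\le)$ be a poset, let $\alpha:X\to X$ be an order automorphism of $(X,\le)$ and $\beta:X\to X$ a self-inverse dual order automorphism of $(X,\le)$ with $\beta=\alpha\circ\beta\circ\alpha$. Set $1={\le}$ and $0=\alpha\circ({\le}^c)^\smile=({\le}^c)^\smile\circ\alpha$, and for $R\in\mathsf{Up}((X^2,\preceq))$ define $R'=\alpha\circ\beta\circ R^c\circ\beta$. Then $\mathbf{Dq}((X^2,\preceq))=\langle\mathsf{Up}((X^2,\preceq)),\cap,\cup,\circ,1,0,{\sim},-,'\rangle$ is a distributive quasi relation algebra.
   Context: For binary relations: converse $R^\smile=\{(x,y)\mid(y,x)\in R\}$; composition $R\circ S=\{(x,y)\mid\exists z\,((x,z)\in R,(z,y)\in S)\}$; complement $R^c=X^2\setminus R$. Functions are identified with their graphs. $X^2$ is partially ordered by $(u,v)\preceq(x,y)$ iff $x\le u$ and $v\le y$; $\mathsf{Up}((X^2,\preceq))$ is its set of up-sets. On it: $R\backslash S=(R^\smile\circ S^c)^c$, $R/S=(R^c\circ S^\smile)^c$, ${\sim}R=R\backslash0$, $-R=0/R$. Order automorphism: bijection with $x\le y\iff\alpha(x)\le\alpha(y)$; dual order automorphism: bijection with $x\le y\iff\beta(y)\le\beta(x)$; self-inverse: $\beta\circ\beta=\mathrm{id}_X$. A quasi relation algebra is an algebra $\langle A,\wedge,\vee,\cdot,1,0,{\sim},-,'\rangle$ where $\langle A,\wedge,\vee,\cdot,1\rangle$ with residuals $\backslash,/$ is a residuated lattice, $0\in A$, ${\sim}a=a\backslash0$,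 $-a=0/a$, ${\sim}{-}a={-}{\sim}a=a$, and $a''=a$, $(a\vee b)'=a'\wedge b'$, $({\sim}a)'=-(a')$, $(a\cdot b)'=a'+b'$ with $a+b={\sim}(-b\cdot-a)$; distributive means the lattice reduct is distributive. *)

(* Defs.v *)
Definition rel (X : Type) := X -> X -> Prop.

Section Rels.
Context {X : Type}.

Definition conv (R : rel X) : rel X := fun x y => R y x.
Definition comp (R S : rel X) : rel X := fun x y => exists z, R x z /\ S z y.
Definition compl (R : rel X) : rel X := fun x y => ~ R x y.
Definition cap (R S : rel X) : rel X := fun x y => R x y /\ S x y.
Definition cup (R S : rel X) : rel X := fun x y => R x y \/ S x y.
Definition graph (f : X -> X) : rel X := fun x y => y = f x.

(* residuals on Up((X^2, preceq)) *)
Definition ldiv (R S : rel X) : rel X := compl (comp (conv R) (compl S)).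
Definition rdiv (R S : rel X) : rel X := compl (comp (compl R) (conv S)).

Definition preceq (le : rel X) (p q : X * X) : Prop :=
  le (fst q) (fst p) /\ le (snd p) (snd q).

Definition is_upset (le : rel X) (R : rel X) : Prop :=
  forall u v x y, R u v -> preceq le (u, v) (x, y) -> R x y.
End Rels.

Definition is_poset {X : Type} (le : rel X) : Prop :=
  (forall x, le x x) /\
  (forall x y, le x y -> le y x -> x = y) /\
  (forall x y z, le x y -> le y z -> le x z).

Definition bijective_fun {X : Type} (f : X -> X) : Prop :=
  (forall x y, f x = f y -> x = y) /\ (forall y, exists x, f x = y).

Definition order_automorphism {X : Type} (le : rel X) (a : X -> X) : Prop :=
  bijective_fun a /\ (forall x y, le x y <-> le (a x) (a y)).

Definition dual_order_automorphism {X : Type} (le : rel X) (b : X -> X) : Prop :=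
  bijective_fun b /\ (forall x y, le x y <-> le (b y) (b x)).

Definition self_inverse {X : Type} (b : X -> X) : Prop := forall x, b (b x) = x.

(* A (distributive) quasi relation algebra, presented as an algebra whose
   carrier is the subset S of a type A, with the operations given on A. *)
Definition is_distributive_qra {A : Type} (S : A -> Prop)
  (meet join mult : A -> A -> A) (one zero : A)
  (lneg rneg prime : A -> A) : Prop :=
  let le a b := meet a b = a in
  (forall a b, S a -> S b -> S (meet a b)) /\
  (forall a b, S a -> S b -> S (join a b)) /\
  (forall a b, S a -> S b -> S (mult a b)) /\
  S one /\ S zero /\
  (forall a, S a -> S (lneg a)) /\
  (forall a, S a -> S (rneg a)) /\
  (forall a, S a -> S (prime a)) /\
  (forall a b, S a -> S b -> meet a b = meet b a) /\
  (forall a b, S a -> S b -> join a b = join b a) /\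
  (forall a b c, S a -> S b -> S c -> meet a (meet b c) = meet (meet a b) c) /\
  (forall a b c, S a -> S b -> S c -> join a (join b c) = join (join a b) c) /\
  (forall a b, S a -> S b -> meet a (join a b) = a) /\
  (forall a b, S a -> S b -> join a (meet a b) = a) /\
  (forall a b c, S a -> S b -> S c ->
     meet a (join b c) = join (meet a b) (meet a c)) /\
  (forall a b c, S a -> S b -> S c -> mult a (mult b c) = mult (mult a b) c) /\
  (forall a, S a -> mult one a = a) /\
  (forall a, S a -> mult a one = a) /\
  (exists ld rd : A -> A -> A,
     (forall a b, S a -> S b -> S (ld a b)) /\
     (forall a b, S a -> S b -> S (rd a b)) /\
     (forall a b c, S a -> S b -> S c ->
        (le (mult a b) c <-> le b (ld a c)) /\
        (le (mult a b) c <-> le a (rd c b))) /\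
     (forall a, S a -> lneg a = ld a zero) /\
     (forall a, S a -> rneg a = rd zero a)) /\
  (forall a, S a -> lneg (rneg a) = a) /\
  (forall a, S a -> rneg (lneg a) = a) /\
  (forall a, S a -> prime (prime a) = a) /\
  (forall a b, S a -> S b -> prime (join a b) = meet (prime a) (prime b)) /\
  (forall a, S a -> prime (lneg a) = rneg (prime a)) /\
  (forall a b, S a -> S b ->
     prime (mult a b) = lneg (mult (rneg (prime b)) (rneg (prime a)))).

(* Main.v *)
Require Import Defs.
From Stdlib Require Import Classical FunctionalExtensionality PropExtensionality.

Lemma rel_ext {X : Type} (R S : rel X) : (forall x y, R x y <-> S x y) -> R = S.
Proof.
  intros H; extensionality x; extensionality y; apply propositional_extensionality; auto.
Qed.

Lemma cap_eq_iff {X : Type} (a b : rel X) :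
  cap a b = a <-> (forall x y, a x y -> b x y).
Proof.
  split.
  - intros H x y Hx. rewrite <- H in Hx. destruct Hx; auto.
  - intros H; apply rel_ext; intros x y; unfold cap; split; [tauto| intros; split; auto].
Qed.

Theorem corollary3p16 (X : Type) (le : rel X) (alpha beta : X -> X) :
  is_poset le ->
  order_automorphism le alpha ->
  dual_order_automorphism le beta ->
  self_inverse beta ->
  graph beta = comp (comp (graph alpha) (graph beta)) (graph alpha) ->
  is_distributive_qra (is_upset le)
    cap cup comp
    le
    (comp (graph alpha) (conv (compl le)))
    (fun R => ldiv R (comp (graph alpha) (conv (compl le))))
    (fun R => rdiv (comp (graph alpha) (conv (compl le))) R)
    (fun R => comp (comp (comp (graph alpha) (graph beta)) (compl R)) (graph beta)).
Proof.
  intros Hpo Ha Hb Hsi Hab.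
  destruct Hpo as [Hrefl [Hanti Htr]].
  destruct Ha as [[ainj asurj] amono]. destruct Hb as [[binj bsurj] bmono].
  assert (hab : forall x, beta x = alpha (beta (alpha x))).
  { intro x. assert (H : graph beta x (beta x)) by reflexivity.
    rewrite Hab in H. destruct H as [z [[w [H1 H2]] H3]]. unfold graph in *.
    subst. auto. }
  assert (hk : forall x, beta (alpha (beta (alpha x))) = x).
  { intro x. rewrite <- hab. apply Hsi. }
  assert (HZ : forall x y, comp (graph alpha) (conv (compl le)) x y <-> ~ le y (alpha x)).
  { intros x y; unfold comp, graph, conv, compl; split.
    - intros [z [-> H]]; exact H.
    - intros H; exists (alpha x); auto. }
  assert (HP : forall R x y,
    comp (comp (comp (graph alpha) (graph beta)) (compl R)) (graph beta) x y
    <-> ~ R (beta (alpha x)) (beta y)).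
  { intros R x y; unfold comp, graph, compl; split.
    - intros [w [[z [[u [H1 H2]] H3]] H4]]. subst. rewrite Hsi. exact H3.
    - intros H. exists (beta y). split; [|rewrite Hsi; reflexivity].
      exists (beta (alpha x)). split; [exists (alpha x); auto | exact H]. }
  assert (ldiv_up : forall a c, is_upset le a -> is_upset le c -> is_upset le (ldiv a c)).
  { intros a c Ha Hc u v x y H [Hxu Hvy]; simpl in Hxu, Hvy.
    intros [z [H1 H2]]. apply H. exists z. split.
    - exact (Ha z x z u H1 (conj (Hrefl z) Hxu)).
    - intro Hc'; apply H2; exact (Hc z v z y Hc' (conj (Hrefl z) Hvy)). }
  assert (rdiv_up : forall c b, is_upset le c -> is_upset le b -> is_upset le (rdiv c b)).
  { intros c b Hc Hb' u v x y H [Hxu Hvy]; simpl in Hxu, Hvy.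
    intros [z [H1 H2]]. apply H. exists z. split.
    - intro Hc'; apply H1; exact (Hc u z x z Hc' (conj Hxu (Hrefl z))).
    - exact (Hb' y z v z H2 (conj Hvy (Hrefl z))). }
  assert (comp_up : forall a b, is_upset le a -> is_upset le b -> is_upset le (comp a b)).
  { intros a b Ha Hb' u v x y [z [H1 H2]] [Hxu Hvy]; simpl in Hxu, Hvy;
    exists z; split; [exact (Ha u z x z H1 (conj Hxu (Hrefl z)))
                     |exact (Hb' z v z y H2 (conj (Hrefl z) Hvy))]. }
  assert (Zup : is_upset le (comp (graph alpha) (conv (compl le)))).
  { intros u v x y H [Hxu Hvy]; simpl in Hxu, Hvy. rewrite HZ in *.
    intro Hc; apply H. apply Htr with y; auto. apply Htr with (alpha x); auto.
    apply (proj1 (amono x u)); auto. }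
  assert (Pup : forall a, is_upset le a -> is_upset le
    (comp (comp (comp (graph alpha) (graph beta)) (compl a)) (graph beta))).
  { intros a Ha u v x y H [Hxu Hvy]; simpl in Hxu, Hvy. rewrite HP in *.
    intro Hc; apply H. apply (Ha _ _ _ _ Hc). split; simpl.
    - apply (proj1 (bmono _ _)), (proj1 (amono _ _)); auto.
    - apply (proj1 (bmono _ _)); auto. }
  assert (Hrn : forall a, is_upset le a -> forall x y,
    rdiv (comp (graph alpha) (conv (compl le))) a x y <-> ~ a y (alpha x)).
  { intros a Ha x y. unfold rdiv, compl at 1, comp at 1, conv. split.
    - intros H Hc. apply H. exists (alpha x). split; auto.
      unfold compl. rewrite HZ. intro Hn; apply Hn, Hrefl.
    - intros H [z [H1 H2]]. unfold compl in H1. rewrite HZ in H1. apply NNPP in H1.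
      apply H. exact (Ha y z y (alpha x) H2 (conj (Hrefl y) H1)). }
  assert (Hln : forall a, is_upset le a -> forall x y,
    ldiv a (comp (graph alpha) (conv (compl le))) x (alpha y) <-> ~ a y x).
  { intros a Ha x y. unfold ldiv, compl at 1, comp at 1, conv. split.
    - intros H Hc. apply H. exists y. split; auto.
      unfold compl. rewrite HZ. intro Hn; apply Hn, Hrefl.
    - intros H [z [H1 H2]]. unfold compl in H2. rewrite HZ in H2. apply NNPP in H2.
      apply (proj2 (amono _ _)) in H2.
      apply H. exact (Ha z x y x H1 (conj H2 (Hrefl x))). }
  unfold is_distributive_qra; cbv beta zeta.
  split; [intros a b Ha Hb u v x y [H1 H2] Hp; split; eauto|].
  split; [intros a b Ha Hb u v x y [H1|H2] Hp; [left|right]; eauto|].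
  split; [intros a b Ha Hb u v x y [z [H1 H2]] [Hxu Hvy]; simpl in Hxu, Hvy;
          exists z; split; [exact (Ha u z x z H1 (conj Hxu (Hrefl z)))
                           |exact (Hb z v z y H2 (conj (Hrefl z) Hvy))]|].
  split; [intros u v x y H [Hxu Hvy]; simpl in Hxu, Hvy; eauto|].
  split; [exact Zup|].
  split; [intros a Ha; apply ldiv_up; auto|].
  split; [intros a Ha; apply rdiv_up; auto|].
  split; [exact Pup|].
  split; [intros; apply rel_ext; intros; unfold cap; tauto|].
  split; [intros; apply rel_ext; intros; unfold cup; tauto|].
  split; [intros; apply rel_ext; intros; unfold cap; tauto|].
  split; [intros; apply rel_ext; intros; unfold cup; tauto|].
  split; [intros; apply rel_ext; intros; unfold cap, cup; tauto|].
  split; [intros; apply rel_ext; intros; unfold cap, cup; tauto|].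
  split; [intros; apply rel_ext; intros; unfold cap, cup; tauto|].
  split; [intros; apply rel_ext; intros; unfold comp; firstorder|].
  split.
  { intros a Ha; apply rel_ext; intros x y; split.
    - intros [z [H1 H2]]; exact (Ha z y x y H2 (conj H1 (Hrefl y))).
    - intros H; exists x; auto. }
  split.
  { intros a Ha; apply rel_ext; intros x y; split.
    - intros [z [H1 H2]]; exact (Ha x z x y H1 (conj (Hrefl x) H2)).
    - intros H; exists y; auto. }
  split.
  { exists ldiv, rdiv. split; [auto|]. split; [auto|]. split.
    - intros a b c Ha' Hb' Hc'. rewrite !cap_eq_iff. split; split.
      + intros H x y Hb1 [z [H1 H2]]. apply H2, H. exists x; auto.
      + intros H x y [z [H1 H2]]. apply NNPP. intro Hn.
        apply (H z y H2). exists x. auto.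
      + intros H x y Ha1 [z [H1 H2]]. apply H1, H. exists y; auto.
      + intros H x y [z [H1 H2]]. apply NNPP. intro Hn.
        apply (H x z H1). exists y. auto.
    - split; intros; reflexivity. }
  split.
  { intros a Ha; apply rel_ext; intros x y. destruct (asurj y) as [y' <-].
    rewrite (Hln _ (rdiv_up _ _ Zup Ha)), (Hrn _ Ha). split; [apply NNPP| tauto]. }
  split.
  { intros a Ha; apply rel_ext; intros x y.
    rewrite (Hrn _ (ldiv_up _ _ Ha Zup)), (Hln _ Ha). split; [apply NNPP| tauto]. }
  split.
  { intros a Ha; apply rel_ext; intros x y. rewrite HP, HP, hk, Hsi.
    split; [apply NNPP| tauto]. }
  split.
  { intros a b Ha Hb'; apply rel_ext; intros x y. unfold cap, cup. rewrite !HP. tauto. }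
  split.
  { intros a Ha; apply rel_ext; intros x y.
    rewrite HP, (hab y), (Hln _ Ha), (Hrn _ (Pup a Ha)), HP. reflexivity. }
  { intros a b Ha Hb'; apply rel_ext; intros x y. destruct (asurj y) as [y' <-].
    assert (Cup : is_upset le (comp
      (rdiv (comp (graph alpha) (conv (compl le)))
         (comp (comp (comp (graph alpha) (graph beta)) (compl b)) (graph beta)))
      (rdiv (comp (graph alpha) (conv (compl le)))
         (comp (comp (comp (graph alpha) (graph beta)) (compl a)) (graph beta))))).
    { apply comp_up; apply rdiv_up; auto. }
    rewrite HP, (Hln _ Cup). split; intros H1 H2; apply H1.
    - destruct H2 as [w [H3 H4]].
      rewrite (Hrn _ (Pup _ Hb')), HP in H3. rewrite (Hrn _ (Pup _ Ha)), HP in H4.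
      exists (beta (alpha w)); split; apply NNPP; auto.
    - destruct H2 as [z [Ha1 Hb1]]. destruct (asurj (beta z)) as [w Hw].
      exists w; split.
      + rewrite (Hrn _ (Pup _ Hb')), HP, Hw, Hsi. tauto.
      + rewrite (Hrn _ (Pup _ Ha)), HP, Hw, Hsi. tauto. }
Qed.
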